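(* Let $Q$ be a $G$-admissible quiver, with extended exchange matrix $\tilde B=\tilde B(Q)$. Let $K$ be a mutable $G$-orbit such that the quiver $\mu_K(Q)$ is also $G$-admissible. Then $(\mu_K(\tilde B))^G=\mu_K(\tilde B^G)$, where on the left $\mu_K=\prod_{k\in K}\mu_k$ is the composition of the mutations of $\tilde B$ at all indices of $K$, and on the right $\mu_K$ is the single matrix mutation of $\tilde B^G$ at the index $K$.
   Context: $Q$ is a quiver (no loops, no oriented 2-cycles) with vertices $1,\dots,m$, where $1,\dots,n$ are mutable and $n+1,\dots,m$ frozen (there are no arrows between frozen vertices). Its extended exchange matrix $\tilde B(Q)=(b_{ij})$ is the $m\times n$ matrix with $b_{ij}$ = (number of arrows $i\to j$) $-$ (number of arrows $j\to i$). Matrix mutation at mutable $k$: $b'_{ij}=-b_{ij}$ if $k\in\{i,j\}$, and $b'_{ij}=b_{ij}+\mathrm{sgn}(b_{ik})\max(b_{ik}b_{kj},0)$ otherwise; quiver mutation $\mu_k$ corresponds to this. A group $G$ acts on $\{1,\dots,m\}$; write $i\sim i'$ if $i,i'$ lie in the same $G$-orbit. $Q$ (or $\tilde B(Q)$) is $G$-admissible if: (1) for $i\sim i'$, $i$ is mutable iff $i'$ is; (2) $b_{ij}=b_{g(i),g(j)}$ for all $i,j$ and $g\in G$; (3) $b_{ii'}=0$ for mutable $i\sim i'$; (4) $b_{ij}b_{i'j}\ge0$ for $i\sim i'$ and mutable $j$. For $G$-admissible $Q$, orbits are mutable or frozen, and $\tilde B^G=(b^G_{IJ})$ is the matrix with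 rows indexed by $G$-orbits and columns by mutable $G$-orbits, $b^G_{IJ}=\sum_{i\in I}b_{ij}$ for any $j\in J$. By condition (3), the mutations $\mu_k$, $k\in K$, commute, so $\mu_K$ is well defined. *)

(* Defs.v *)
From mathcomp Require Import all_boot all_order all_algebra all_fingroup.
Set Implicit Arguments. Unset Strict Implicit. Unset Printing Implicit Defensive.
Import Order.TTheory GRing.Theory Num.Theory.
Local Open Scope ring_scope.

(* Vertices are 'I_m; vertex i is mutable iff (val i < n) (the paper's 1..n,
   shifted to 0..n-1).  An extended exchange matrix is B : 'M[int]_(m, n),
   column j : 'I_n corresponding to the mutable vertex widen_ord hnm j. *)

(* b_{ij} for two vertices i j : 'I_m (j mutable; 0 by convention otherwise) *)
Definition ent (n m : nat) (B : 'M[int]_(m, n)) (i j : 'I_m) : int :=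
  oapp (fun j' : 'I_n => B i j') 0 (insub (val j) : option 'I_n).

Definition mut (n m : nat) (hnm : (n <= m)%N) (B : 'M[int]_(m, n)) (k : 'I_n)
  : 'M[int]_(m, n) :=
  \matrix_(i < m, j < n)
    if (i == widen_ord hnm k) || (j == k) then - B i j
    else B i j + (sgz (B i k) * Num.max (B i k * B (widen_ord hnm k) j) 0).

Definition mutv (n m : nat) (hnm : (n <= m)%N) (B : 'M[int]_(m, n)) (k : 'I_m)
  : 'M[int]_(m, n) :=
  oapp (mut hnm B) B (insub (val k) : option 'I_n).

Definition mutK (n m : nat) (hnm : (n <= m)%N) (B : 'M[int]_(m, n))
  (K : {set 'I_m}) : 'M[int]_(m, n) :=
  foldr (fun k C => mutv hnm C k) B (enum K).

Definition admissible (n m : nat) (G : {group {perm 'I_m}}) (B : 'M[int]_(m, n))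
  : Prop :=
  [/\ (forall (g : {perm 'I_m}) (i : 'I_m), g \in G -> (g i < n)%N = (i < n)%N),
      (forall (g : {perm 'I_m}) (i j : 'I_m), g \in G -> (j < n)%N ->
          ent B i j = ent B (g i) (g j)),
      (forall i i' : 'I_m, (i < n)%N -> i' \in orbit 'P G i -> ent B i i' = 0) &
      (forall i i' j : 'I_m, i' \in orbit 'P G i -> (j < n)%N ->
          0 <= ent B i j * ent B i' j)].

Definition orbitsG (m : nat) (G : {group {perm 'I_m}}) : {set {set 'I_m}} :=
  [set orbit 'P G i | i in [set: 'I_m]].
Definition mut_orbitsG (n m : nat) (G : {group {perm 'I_m}}) : {set {set 'I_m}} :=
  [set orbit 'P G j | j in [set j : 'I_m | (j < n)%N]].

(* B^G_{IJ} = sum_{i in I} b_{ij} for (any) j in J; we take j := [pick j in J]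
   (J is a nonempty orbit in the statement) *)
Definition BG (n m : nat) (B : 'M[int]_(m, n)) (I J : {set 'I_m}) : int :=
  \sum_(i in I) oapp (ent B i) 0 [pick j in J].

Definition mutG (T : Type) (eqT : T -> T -> bool) (b : T -> T -> int) (K : T)
  (I J : T) : int :=
  if eqT I K || eqT J K then - b I J
  else b I J + (sgz (b I K) * Num.max (b I K * b K J) 0).

(* Main.v *)
Require Import Defs.
From mathcomp Require Import all_boot all_order all_algebra all_fingroup.
Import Order.TTheory GRing.Theory Num.Theory.
Local Open Scope ring_scope.

Definition fm (x y : int) : int := sgz x * Num.max (x * y) 0.

Lemma fpp x y : 0 <= x -> 0 <= y -> fm x y = x * y.
Proof.
rewrite /fm le_eqVlt => /orP[/eqP<-|x0] y0; first by rewrite sgz0 !mul0r.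
by rewrite gtr0_sgz // mul1r max_l // mulr_ge0 // ltW.
Qed.
Lemma fpn x y : 0 <= x -> y <= 0 -> fm x y = 0.
Proof.
rewrite /fm le_eqVlt => /orP[/eqP<-|x0] y0; first by rewrite sgz0 !mul0r.
by rewrite max_r ?mulr0 // mulr_ge0_le0 // ltW.
Qed.
Lemma fnp x y : x <= 0 -> 0 <= y -> fm x y = 0.
Proof.
rewrite /fm le_eqVlt => /orP[/eqP->|x0] y0; first by rewrite sgz0 !mul0r.
by rewrite max_r ?mulr0 // mulr_le0_ge0 // ltW.
Qed.
Lemma fnn x y : x <= 0 -> y <= 0 -> fm x y = - (x * y).
Proof.
rewrite /fm le_eqVlt => /orP[/eqP->|x0] y0; first by rewrite sgz0 !mul0r oppr0.
by rewrite ltr0_sgz // max_l ?mulN1r // mulr_le0 // ltW.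
Qed.
Lemma fx0 x : fm x 0 = 0. Proof. by rewrite /fm mulr0 maxxx mulr0. Qed.
Lemma f0y y : fm 0 y = 0. Proof. by rewrite /fm sgz0 mul0r. Qed.

Lemma sign_split (T : finType) (P : pred T) (a : T -> int) :
  (forall p q, P p -> P q -> 0 <= a p * a q) ->
  (forall p, P p -> 0 <= a p) \/ (forall p, P p -> a p <= 0).
Proof.
move=> H; case: (boolP [forall p, P p ==> (0 <= a p)]) => [/forallP A|/forallPn [p0]].
  by left=> p Pp; have := A p; rewrite Pp.
rewrite negb_imply => /andP[Pp0]; rewrite -ltNge => ap0.
right=> p Pp; have := H p p0 Pp Pp0; rewrite nmulr_lge0 //.
Qed.


Lemma key (T : finType) (I K : {set T}) (x : T -> T -> int) (y : T -> int) k0 :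
 k0 \in K ->
 (forall k, k \in K -> \sum_(i in I) x i k = \sum_(i in I) x i k0) ->
 (forall i i' k k', i \in I -> i' \in I -> k \in K -> k' \in K -> 0 <= x i k * x i' k') ->
 (forall k k', k \in K -> k' \in K -> 0 <= y k * y k') ->
 \sum_(i in I) \sum_(k in K) fm (x i k) (y k) = fm (\sum_(i in I) x i k0) (\sum_(k in K) y k).
Proof.
move=> k0K hsum hx hy.
have E : \sum_(i in I) \sum_(k in K) (x i k * y k) = (\sum_(i in I) x i k0) * (\sum_(k in K) y k).
  rewrite exchange_big mulr_sumr; apply: eq_bigr => k kK.
  by rewrite -mulr_suml hsum.
have [sx|sx] := @sign_split _ (fun p : T * T => (p.1 \in I) && (p.2 \in K))
   (fun p => x p.1 p.2)
   (fun p q => fun (Pp : (p.1 \in I) && (p.2 \in K)) (Pq : (q.1 \in I) && (q.2 \in K)) =>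
     hx _ _ _ _ (proj1 (andP Pp)) (proj1 (andP Pq)) (proj2 (andP Pp)) (proj2 (andP Pq)));
have [sy|sy] := @sign_split _ (fun k => k \in K) y hy.
- have X0 : 0 <= \sum_(i in I) x i k0 by apply: sumr_ge0 => i iI; apply: (sx (i, k0)); rewrite /= iI k0K.
  have Y0 : 0 <= \sum_(k in K) y k by apply: sumr_ge0 => k kK; apply: sy.
  rewrite fpp // -E.
  by apply: eq_bigr => i iI; apply: eq_bigr => k kK; rewrite fpp // ?sy //; apply: (sx (i, k)); rewrite /= iI kK.
- have X0 : 0 <= \sum_(i in I) x i k0 by apply: sumr_ge0 => i iI; apply: (sx (i, k0)); rewrite /= iI k0K.
  have Y0 : \sum_(k in K) y k <= 0 by apply: sumr_le0 => k kK; apply: sy.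
  rewrite fpn //.
  by rewrite big1 // => i iI; rewrite big1 // => k kK; rewrite fpn ?sy //; apply: (sx (i, k)); rewrite /= iI kK.
- have X0 : \sum_(i in I) x i k0 <= 0 by apply: sumr_le0 => i iI; apply: (sx (i, k0)); rewrite /= iI k0K.
  have Y0 : 0 <= \sum_(k in K) y k by apply: sumr_ge0 => k kK; apply: sy.
  rewrite fnp //.
  by rewrite big1 // => i iI; rewrite big1 // => k kK; rewrite fnp ?sy //; apply: (sx (i, k)); rewrite /= iI kK.
- have X0 : \sum_(i in I) x i k0 <= 0 by apply: sumr_le0 => i iI; apply: (sx (i, k0)); rewrite /= iI k0K.
  have Y0 : \sum_(k in K) y k <= 0 by apply: sumr_le0 => k kK; apply: sy.
  rewrite fnn // -E -sumrN; apply: eq_bigr => i iI; rewrite -sumrN; apply: eq_bigr => k kK.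
  by rewrite fnn ?sy //; apply: (sx (i, k)); rewrite /= iI kK.
Qed.

Set Implicit Arguments. Unset Strict Implicit.

Lemma fmE x y : sgz x * Num.max (x * y) 0 = fm x y. Proof. by []. Qed.

Lemma ent_ord n m (C : 'M[int]_(m,n)) i (k : 'I_m) (hk : (k < n)%N) :
  ent C i k = C i (Ordinal hk).
Proof. by rewrite /ent insubT. Qed.

Lemma ent_widen n m (hnm : (n <= m)%N) (C : 'M[int]_(m,n)) i (j : 'I_n) :
  ent C i (widen_ord hnm j) = C i j.
Proof. by rewrite (@ent_ord _ _ C i (widen_ord hnm j) (ltn_ord j)); congr (C i _); apply: val_inj. Qed.

Lemma mutv_ord n m (hnm : (n <= m)%N) (C : 'M[int]_(m,n)) (k : 'I_m) (hk : (k < n)%N) :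
  mutv hnm C k = mut hnm C (Ordinal hk).
Proof. by rewrite /mutv insubT. Qed.

Lemma mut_formula n m (hnm : (n <= m)%N) (B : 'M[int]_(m,n)) (s : seq 'I_m) :
  uniq s -> (forall k, k \in s -> (k < n)%N) ->
  (forall a b, a \in s -> b \in s -> ent B a b = 0) -> forall i j,
  (foldr (fun k C => mutv hnm C k) B s) i j =
  if (i \in s) || (widen_ord hnm j \in s) then - B i j
  else B i j + \sum_(k <- s) fm (ent B i k) (ent B k (widen_ord hnm j)).
Proof.
elim: s => [|k s IH] /=.
  by move=> _ _ _ i j; rewrite big_nil addr0.
move=> /andP[ks us] hm h0 i j.
have hk : (k < n)%N by apply: hm; rewrite mem_head.
have hm' : forall k', k' \in s -> (k' < n)%N by move=> k' k's; apply: hm; rewrite in_cons k's orbT.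
have h0' : forall a b, a \in s -> b \in s -> ent B a b = 0.
  by move=> a b ha hb; apply: h0; rewrite in_cons ?ha ?hb orbT.
have IH' := IH us hm' h0'.
have wk : widen_ord hnm (Ordinal hk) = k by apply: val_inj.
have ej : (j == Ordinal hk) = (widen_ord hnm j == k) by rewrite -!val_eqE.
have zk : forall a, a \in k :: s -> ent B k a = 0 /\ ent B a k = 0.
  by move=> a ha; split; apply: h0 => //; rewrite mem_head.
rewrite mutv_ord /mut mxE wk ej !IH' wk (negbTE ks) /= in_cons big_cons.
rewrite (ent_ord B i hk) -(ent_widen hnm B i j) -(ent_widen hnm B k j) -(ent_widen hnm B i (Ordinal hk)) wk.
have -> : \sum_(k' <- s) fm (ent B i k') (ent B k' k) = 0.
  by rewrite big1_seq // => k' /andP[_ k's]; rewrite (proj2 (zk k' _)) ?fx0 // in_cons k's orbT.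
rewrite addr0.
set wj := widen_ord hnm j.
case: (eqVneq i k) => [->|nik] /=.
  rewrite (negbTE ks) /=.
  rewrite big1_seq ?addr0; last by move=> k' /andP[_ k's]; rewrite (proj1 (zk k' _)) ?f0y // in_cons k's orbT.
  case: (boolP (wj \in s)) => wjs; rewrite ?orbT ?orbF //=.
    by rewrite (proj1 (zk wj _)) ?oppr0 // in_cons wjs orbT.
have sk0 : forall x : _ -> int, \sum_(k0 <- s) fm (ent B k k0) (x k0) = 0.
  by move=> x; rewrite big1_seq // => k' /andP[_ k's]; rewrite (proj1 (zk k' _)) ?f0y // in_cons k's orbT.
rewrite fmE.
case: (eqVneq wj k) => [wjk|nwj] /=.
  rewrite wjk (negbTE ks) orbF mem_head orbT.
  have -> : \sum_(k0 <- s) fm (ent B i k0) (ent B k0 k) = 0.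
    by rewrite big1_seq // => k' /andP[_ k's]; rewrite (proj2 (zk k' _)) ?fx0 // in_cons k's orbT.
  case: (boolP (i \in s)) => iS //=; first by rewrite opprK (proj2 (zk i _)) ?oppr0 // in_cons iS orbT.
  by rewrite addr0.
rewrite in_cons (negbTE nwj) /= orbF.
case: (boolP (i \in s)) => iS /=.
  by rewrite (proj2 (zk i _)) ?oppr0 ?f0y ?addr0 // in_cons iS orbT.
case: (boolP (wj \in s)) => wjs /=.
  by rewrite (proj1 (zk wj _)) ?oppr0 ?fx0 ?addr0 // in_cons wjs orbT.
rewrite sk0 addr0 -addrA; congr (_ + _); exact: addrC.
Qed.

Lemma orbP m (G : {group {perm 'I_m}}) x y :
  reflect (exists2 g, g \in G & g y = x) (x \in orbit 'P G y).
Proof. by apply: (iffP orbitP) => -[g gG e]; exists g => //; move: e; rewrite /= apermE. Qed.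

Lemma orb_act m (G : {group {perm 'I_m}}) g x y : g \in G ->
  (g x \in orbit 'P G y) = (x \in orbit 'P G y).
Proof. by move=> gG; have := orbit_actr 'P y x gG; rewrite /= apermE. Qed.

Lemma orb_same m (G : {group {perm 'I_m}}) u v y :
  u \in orbit 'P G y -> v \in orbit 'P G y -> v \in orbit 'P G u.
Proof. by move=> uy vy; apply: orbit_trans vy _; rewrite orbit_sym. Qed.

Unset Implicit Arguments. Set Strict Implicit.

Theorem lemma4p4p5 (n m : nat) (hnm : (n <= m)%N) (G : {group {perm 'I_m}})
  (B : 'M[int]_(m, n)) (k : 'I_m) :
  (k < n)%N ->
  admissible G B ->
  admissible G (mutK hnm B (orbit 'P G k)) ->
  forall I J : {set 'I_m},
    I \in orbitsG G -> J \in mut_orbitsG n G ->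
    BG (mutK hnm B (orbit 'P G k)) I J
    = mutG (fun X Y : {set 'I_m} => X == Y) (BG B) (orbit 'P G k) I J.
Proof.
move=> hk [h1 h2 h3 h4] _ I0 J0 /imsetP[i0 _ ->] /imsetP[j1]; rewrite inE => hj1 ->.
set K := orbit 'P G k.
have mutorb : forall x y, x \in orbit 'P G y -> (x < n)%N = (y < n)%N.
  by move=> x y /orbP[g gG <-]; apply: h1.
have Kmut : forall x, x \in K -> (x < n)%N by move=> x /mutorb ->.
have K0 : forall a b, a \in K -> b \in K -> ent B a b = 0.
  by move=> a b aK bK; apply: h3; [exact: Kmut | exact: orb_same aK bK].
have form := @mut_formula n m hnm B _ (enum_uniq (mem K)).
have /form {}form : forall x, x \in enum (mem K) -> (x < n)%N.
  by move=> x; rewrite mem_enum; apply: Kmut.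
have /form {}form : forall a b, a \in enum (mem K) -> b \in enum (mem K) -> ent B a b = 0.
  by move=> a b; rewrite !mem_enum; apply: K0.
rewrite /BG /mutG fmE.
set I := orbit 'P G i0; set J := orbit 'P G j1.
case: pickP => [j0 j0J|nJ]; last by have := nJ j1; rewrite /= orbit_refl.
case: pickP => [k0 k0K|nK]; last by have := nK k; rewrite /= orbit_refl.
rewrite /=.
have hj0 : (j0 < n)%N by rewrite (mutorb _ _ j0J).
have wj0 : widen_ord hnm (Ordinal hj0) = j0 by apply: val_inj.
have Cf : forall i, ent (mutK hnm B K) i j0 = if (i \in K) || (j0 \in K) then - ent B i j0
   else ent B i j0 + \sum_(k' in K) fm (ent B i k') (ent B k' j0).
  move=> i; rewrite (ent_ord _ i hj0) /mutK form wj0 !mem_enum big_enum /=.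
  by rewrite -(ent_ord B i hj0).
have orbI : forall x, x \in I -> I = orbit 'P G x by move=> x xI; apply/esym/orbit_eqP.
case: (eqVneq I K) => [IK|nIK] /=.
  rewrite -sumrN; apply: eq_bigr => i iI; rewrite Cf -IK iI //.
case: (eqVneq J K) => [JK|nJK] /=.
  rewrite -sumrN; apply: eq_bigr => i iI; rewrite Cf -JK j0J orbT //.
have j0K : j0 \notin K.
  apply/negP => j0K; move/eqP: nJK; apply.
  exact: etrans (esym (orbit_eqP j0J)) (orbit_eqP j0K).
have nIK' : forall i, i \in I -> i \notin K.
  move=> i iI; apply/negP => iK; move/eqP: nIK; apply.
  exact: etrans (esym (orbit_eqP iI)) (orbit_eqP iK).
rewrite (eq_bigr (fun i => ent B i j0 + \sum_(k' in K) fm (ent B i k') (ent B k' j0))); last first.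
  by move=> i iI; rewrite Cf (negbTE (nIK' i iI)) (negbTE j0K).
rewrite big_split /=; congr (_ + _).
have inv : forall k', k' \in K -> \sum_(i in I) ent B i k' = \sum_(i in I) ent B i k.
  move=> k' /orbP[g gG <-].
  rewrite (reindex_inj (@perm_inj _ g)) /=.
  apply: eq_big => [i|i _]; first by rewrite /= orb_act.
  by rewrite -h2.
have entV : forall g i, g \in G -> ent B i (g k) = ent B ((g^-1)%g i) k.
  move=> g i gG; rewrite (h2 (g^-1)%g i (g k)) ?groupV ?permK //.
  by rewrite h1.
apply: key => //.
- by move=> k' k'K; rewrite !inv.
- move=> i i' k1 k2 iI i'I /orbP[g1 g1G <-] /orbP[g2 g2G <-].
  rewrite !entV //; apply: h4 => //; apply: (orb_same (y := i0)); rewrite orb_act ?groupV //.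
- move=> k1 k2 k1K k2K; apply: h4 => //; exact: orb_same k1K k2K.
Qed.
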